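(* Let $I\subset(0,1)$ be an admissible mesh family for $\Omega$, and for $h\in I$ let $\Sigma_h$ be the set of $(d-1)$-dimensional closed faces (facets) of the convex polytope $\overline{\Omega_h}$. If $\Omega$ is strictly convex, then $$\lim_{I\ni h\to0}\ \sup_{\boldsymbol{K}\in\Sigma_h}\ \sup_{\boldsymbol{x},\boldsymbol{x}'\in\boldsymbol{K}}|\boldsymbol{x}-\boldsymbol{x}'|=0.$$
   Context: $\Omega\subset\mathbb{R}^d$ is a bounded open convex domain; it is strictly convex if $\lambda\boldsymbol{x}+(1-\lambda)\boldsymbol{x}'\in\Omega$ for all $\boldsymbol{x},\boldsymbol{x}'\in\overline\Omega$, $0<\lambda<1$. $\Omega_\delta=\{\boldsymbol{x}\in\Omega:\operatorname{dist}(\boldsymbol{x},\partial\Omega)>\delta\}$. A mesh of $\Omega$ with parameter $h>0$ is a finite set $\mathcal T_h$ of closed $d$-simplices contained in $\overline\Omega$ such that: (i) for $T\ne T'$ in $\mathcal T_h$, $T\cap T'$ is a common sub-simplex of both of dimension at most $d-1$; (ii) $h=\max_{T\in\mathcal T_h}\operatorname{diam}T$; (iii) $\Omega_h:=\operatorname{Int}(\bigcup_{T\in\mathcal T_h}T)$ is convex; (iv) every vertex of $\mathcal T_h$ lying on $\partial\Omega_h$ belongs to $\partial\Omega$. An admissible mesh family is a set $I\subset(0,1)$ having $0$ as its unique accumulation point, together with a mesh $\mathcal T_h$ of $\Omega$ with parameter $h$ for each $h\in I$, such that for every $\delta>0$ there is $h_\delta>0$ with $\overline{\Omega_\delta}\subset\Omega_h$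 whenever $h\in I$ and $h<h_\delta$. *)

(* Defs.v *)
From mathcomp Require Import all_boot.
From Stdlib Require Import Reals.
Set Implicit Arguments. Unset Strict Implicit. Unset Printing Implicit Defensive.
Open Scope R_scope.

Definition Vec (d : nat) := 'I_d -> R.

Definition vsum (k : nat) (f : 'I_k -> R) : R := \big[Rplus/R0]_(i < k) f i.
Definition dot (d : nat) (x y : Vec d) : R := vsum (fun i => x i * y i).
Definition enorm (d : nat) (x : Vec d) : R := sqrt (dot x x).
Definition edist (d : nat) (x y : Vec d) : R := enorm (fun i => x i - y i).

Definition lincomb (d k : nat) (mu : 'I_k -> R) (p : 'I_k -> Vec d) : Vec d :=
  fun i => \big[Rplus/R0]_(j < k) (mu j * p j i).

Definition closureR (d : nat) (A : Vec d -> Prop) (x : Vec d) : Prop :=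
  forall e, 0 < e -> exists y, A y /\ edist x y < e.
Definition set_interior (d : nat) (A : Vec d -> Prop) (x : Vec d) : Prop :=
  exists e, 0 < e /\ forall y, edist x y < e -> A y.
Definition set_boundary (d : nat) (A : Vec d -> Prop) (x : Vec d) : Prop :=
  closureR A x /\ ~ set_interior A x.
Definition set_open (d : nat) (A : Vec d -> Prop) : Prop :=
  forall x, A x -> set_interior A x.
Definition set_bounded (d : nat) (A : Vec d -> Prop) : Prop :=
  exists M, forall x, A x -> enorm x <= M.
Definition set_convex (d : nat) (A : Vec d -> Prop) : Prop :=
  forall x y l, A x -> A y -> 0 <= l <= 1 ->
    A (fun i => l * x i + (1 - l) * y i).
Definition strictly_convex (d : nat) (A : Vec d -> Prop) : Prop :=
  forall x x' l, closureR A x -> closureR A x' -> x <> x' -> 0 < l < 1 ->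
    A (fun i => l * x i + (1 - l) * x' i).

(* Omega_delta = { x in Omega : edist(x, boundary Omega) > delta },
   edist(x, B) = inf_{y in B} |x - y|, so "> delta" means some delta' > delta
   is a lower bound of the distances. *)
Definition Omega_delta (d : nat) (Om : Vec d -> Prop) (delta : R) (x : Vec d) : Prop :=
  Om x /\ exists delta', delta < delta' /\
    forall y, set_boundary Om y -> delta' <= edist x y.

Definition aff_indep (d k : nat) (p : 'I_k -> Vec d) : Prop :=
  forall mu : 'I_k -> R, vsum mu = 0 -> (forall i, lincomb mu p i = 0) ->
    forall j, mu j = 0.

Definition hull_sub (d k : nat) (v : 'I_k -> Vec d) (S : {set 'I_k}) (x : Vec d) : Prop :=
  exists lam : 'I_k -> R, (forall j, 0 <= lam j) /\ (forall j, j \notin S -> lam j = 0)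
    /\ vsum lam = 1 /\ x = lincomb lam v.

(* a d-simplex given by its d+1 vertices (required affinely independent) *)
Definition Simplex (d : nat) := 'I_d.+1 -> Vec d.
Definition simplex_set (d : nat) (T : Simplex d) (x : Vec d) : Prop :=
  hull_sub T setT x.

Definition mesh_union (d : nat) (M : seq (Simplex d)) (x : Vec d) : Prop :=
  exists T, List.In T M /\ simplex_set T x.
Definition Omega_h (d : nat) (M : seq (Simplex d)) : Vec d -> Prop :=
  set_interior (mesh_union M).

Definition is_mesh (d : nat) (Om : Vec d -> Prop) (h : R) (M : seq (Simplex d)) : Prop :=
  (forall T, List.In T M -> aff_indep T /\ forall x, simplex_set T x -> closureR Om x) /\
  (* (i) distinct simplices meet in a common sub-simplex of dim <= d-1 (possibly empty) *)
  (forall T T', List.In T M -> List.In T' M ->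
     ~ (forall x, simplex_set T x <-> simplex_set T' x) ->
     exists (S S' : {set 'I_d.+1}), leq #|S| d /\ leq #|S'| d /\
       (forall x, (simplex_set T x /\ simplex_set T' x) <-> hull_sub T S x) /\
       (forall x, hull_sub T S x <-> hull_sub T' S' x)) /\
  is_lub (fun r => exists T, List.In T M /\ exists x y,
            simplex_set T x /\ simplex_set T y /\ r = edist x y) h /\
  set_convex (Omega_h M) /\
  (forall T j, List.In T M -> set_boundary (Omega_h M) (T j) -> set_boundary Om (T j)).

Definition admissible_mesh_family (d : nat) (Om : Vec d -> Prop) (I : R -> Prop)
    (mesh : R -> seq (Simplex d)) : Prop :=
  (forall h, I h -> 0 < h < 1) /\
  (* 0 is an accumulation point of I *)
  (forall e, 0 < e -> exists h, I h /\ h <> 0 /\ Rabs h < e) /\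
  (* and the only one *)
  (forall a, a <> 0 -> exists e, 0 < e /\
      forall h, I h -> h <> a -> e <= Rabs (h - a)) /\
  (forall h, I h -> is_mesh Om h (mesh h)) /\
  (forall delta, 0 < delta -> exists hd, 0 < hd /\
     forall h, I h -> h < hd ->
       forall x, closureR (Omega_delta Om delta) x -> Omega_h (mesh h) x).

Definition facet (d : nat) (P K : Vec d -> Prop) : Prop :=
  exists (a : Vec d) (b : R), (exists i, a i <> 0) /\
    (forall y, P y -> dot a y <= b) /\
    (forall y, K y <-> (P y /\ dot a y = b)) /\
    exists p : 'I_d -> Vec d, aff_indep p /\ forall j, K (p j).

(* Main.v *)
From HB Require Import structures.
Require Import Defs.
From mathcomp Require Import all_boot.
From Stdlib Require Import Reals Lra Lia Psatz ClassicalEpsilon Classical.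
From Coquelicot Require Import Compactness.
Open Scope R_scope.

Lemma Rplus_assoc' : associative Rplus. Proof. move=> *; lra. Qed.
Lemma Rplus_comm' : commutative Rplus. Proof. move=> *; lra. Qed.
Lemma Rplus_0_l' : left_id R0 Rplus. Proof. move=> *; lra. Qed.
HB.instance Definition _ := Monoid.isComLaw.Build R R0 Rplus Rplus_assoc' Rplus_comm' Rplus_0_l'.

Lemma vsum_le k (f g : 'I_k -> R) : (forall i, f i <= g i) -> vsum f <= vsum g.
Proof.
rewrite /vsum => H. elim/big_ind2: _ => //; try lra. move=> *; lra.
Qed.

Lemma vsum_ge0 k (f : 'I_k -> R) : (forall i, 0 <= f i) -> 0 <= vsum f.
Proof. rewrite /vsum => H. elim/big_ind: _ => //; try lra. move=> *; lra. Qed.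

Lemma vsum_term k (f : 'I_k -> R) j : (forall i, 0 <= f i) -> f j <= vsum f.
Proof.
move=> H. rewrite /vsum (bigD1 j) //=.
rewrite -{1}(Rplus_0_r (f j)); apply Rplus_le_compat_l.
elim/big_ind: _ => [|a b ? ?|i _]; [lra|lra|apply: H].
Qed.

Lemma vsum_const k c : vsum (fun _ : 'I_k => c) = INR k * c.
Proof.
rewrite /vsum; elim: k => [|k IH]; first by rewrite big_ord0 /=; lra.
rewrite big_ord_recr IH S_INR /=; lra.
Qed.

Lemma vsum_plus k (f g : 'I_k -> R) : vsum (fun i => f i + g i) = vsum f + vsum g.
Proof. by rewrite /vsum big_split. Qed.

Lemma vsum_scal k c (f : 'I_k -> R) : vsum (fun i => c * f i) = c * vsum f.
Proof.
rewrite /vsum; elim: k f => [|k IH] f; first by rewrite !big_ord0 /=; lra.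
rewrite !big_ord_recr /= IH Rmult_plus_distr_l //.
Qed.

Definition KK (d : nat) := INR d + 1.
Lemma KK_pos d : 0 < KK d.
Proof. rewrite /KK; have := pos_INR d; lra. Qed.

Lemma dot_ge0 d (v : Vec d) : 0 <= dot v v.
Proof. apply: vsum_ge0 => i; nra. Qed.

Lemma coord_le_norm d (v : Vec d) i : Rabs (v i) <= enorm v.
Proof.
rewrite /enorm -sqrt_Rsqr_abs; apply: sqrt_le_1_alt.
rewrite /Rsqr /dot. apply: (@vsum_term _ (fun j => v j * v j) i) => j; nra.
Qed.

Lemma edist_coord d (x y : Vec d) i : Rabs (x i - y i) <= edist x y.
Proof. exact: (@coord_le_norm _ (fun i => x i - y i)). Qed.

Lemma norm_lt_sup d (v : Vec d) s : 0 < s -> (forall i, Rabs (v i) < s) -> enorm v < KK d * s.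
Proof.
move=> s0 H.
have H1 : dot v v <= INR d * (s * s).
  rewrite -vsum_const; apply: vsum_le => i.
  have := H i; have := Rabs_pos (v i) => ? ?.
  have -> : v i * v i = Rabs (v i) * Rabs (v i) by rewrite -Rabs_mult Rabs_right //; nra.
  nra.
have H2 := pos_INR d.
rewrite /enorm. apply: (Rle_lt_trans _ (sqrt (INR d * (s * s)))); first exact: sqrt_le_1_alt.
rewrite -(sqrt_Rsqr (KK d * s)); last by have := KK_pos d; nra.
apply: sqrt_lt_1_alt; split; first nra.
rewrite /Rsqr /KK; nra.
Qed.

Lemma edist_lt_sup d (x y : Vec d) s : 0 < s -> (forall i, Rabs (x i - y i) < s) -> edist x y < KK d * s.
Proof. move=> s0 H; exact: (@norm_lt_sup _ (fun i => x i - y i)). Qed.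

Lemma edist_refl d (x : Vec d) : edist x x = 0.
Proof.
rewrite /edist /enorm.
have -> : dot (fun i => x i - x i) (fun i => x i - x i) = 0.
  apply: Rle_antisym; last exact: dot_ge0.
  rewrite -(Rmult_0_r (INR d)) -vsum_const; apply: vsum_le => i; nra.
exact: sqrt_0.
Qed.
Fixpoint tenc (n : nat) (f : nat -> R) : Tn n R :=
  match n with O => tt | S n => (f O, tenc n (fun k => f (S k))) end.
Fixpoint tnth (n : nat) : Tn n R -> nat -> R :=
  match n with O => fun _ _ => 0 | S n => fun t k => match k with O => fst t | S k => tnth n (snd t) k end end.

Lemma tnth_enc n f k : (k < n)%coq_nat -> tnth n (tenc n f) k = f k.
Proof.
elim: n f k => [|n IH] f [|k] /= H; try lia; try done.
rewrite IH //; lia.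
Qed.

Lemma close_nth n r u t : close_n n r u t -> forall k, (k < n)%coq_nat -> Rabs (tnth n u k - tnth n t k) < r.
Proof.
elim: n u t => [|n IH]; first by move=> *; lia.
move=> [u1 u2] [t1 t2] /=.
case=> H1 H2 [|k] Hk //=. apply: IH => //; lia.
Qed.

Lemma bounded_nth n a b u : (forall k, (k < n)%coq_nat -> tnth n a k <= tnth n u k <= tnth n b k) -> bounded_n n a b u.
Proof.
elim: n a b u => [|n IH] /=; first done.
move=> [a1 a2] [b1 b2] [u1 u2] H; split; first by apply: (H 0%nat); lia.
apply: IH => k Hk; apply: (H (S k)); lia.
Qed.

Definition vext d (y : Vec d) (k : nat) : R :=
  match insub k with Some i => y i | None => 0 end.
Arguments vext {d}.
Lemma vext_val d (y : Vec d) (i : 'I_d) : vext y (val i) = y i.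
Proof. by rewrite /vext valK. Qed.
Definition penc d (y y' : Vec d) (k : nat) : R :=
  if leq (S k) d then vext y k else vext y' (subn k d).
Arguments penc {d}.
Lemma penc1 d (y y' : Vec d) (i : 'I_d) : penc y y' (val i) = y i.
Proof. rewrite /penc; have -> : leq (S (val i)) d = true by exact: ltn_ord. by rewrite vext_val. Qed.
Lemma penc2 d (y y' : Vec d) (i : 'I_d) : penc y y' (addn d (val i)) = y' i.
Proof. rewrite /penc; have -> : leq (S (addn d (val i))) d = false by rewrite ltnNge leq_addr. by rewrite /= addKn vext_val. Qed.

Set Implicit Arguments. Unset Strict Implicit.
Arguments edist_coord {d}. Arguments coord_le_norm {d}. Arguments edist_lt_sup {d}. Arguments norm_lt_sup {d}. Arguments edist_refl {d}. Arguments dot_ge0 {d}.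
Lemma vsum_ext k (f g : 'I_k -> R) : (forall i, f i = g i) -> vsum f = vsum g.
Proof. by move=> H; rewrite /vsum; apply: eq_bigr => i _. Qed.

Definition mid d (x x' : Vec d) : Vec d := fun i => /2 * x i + (1 - /2) * x' i.

Lemma open_ball d (A : Vec d -> Prop) m : set_interior A m ->
  exists r, 0 < r /\ forall z, (forall i, Rabs (z i - m i) < r) -> A z.
Proof.
case=> e [e0 He]; exists (e / KK d); split.
  apply: Rdiv_lt_0_compat => //; exact: KK_pos.
move=> z Hz; apply: He.
have -> : e = KK d * (e / KK d) by field; have := KK_pos d; lra.
apply: edist_lt_sup; first by apply: Rdiv_lt_0_compat => //; exact: KK_pos.
by move=> i; rewrite Rabs_minus_sym.
Qed.

Lemma interior_ball d (A : Vec d -> Prop) m : set_interior A m ->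
  exists r, 0 < r /\ forall y, (forall i, Rabs (y i - m i) < r) -> set_interior A y.
Proof.
move/open_ball=> [r [r0 Hr]]; exists (r/2); split; first lra.
move=> y Hy; exists (r/2); split; first lra.
move=> z Hz; apply: Hr => i.
have := edist_coord y z i; have := Hy i.
have := Rabs_triang (z i - y i) (y i - m i).
rewrite Rabs_minus_sym.
have -> : z i - y i + (y i - m i) = z i - m i by ring.
lra.
Qed.

Lemma closure_self d (A : Vec d -> Prop) x : A x -> closureR A x.
Proof. by move=> Ax e e0; exists x; rewrite edist_refl. Qed.

Lemma interior_self d (A : Vec d -> Prop) x : set_interior A x -> A x.
Proof. by case=> e [e0 He]; apply: He; rewrite edist_refl. Qed.

Lemma closure_sup d (A : Vec d -> Prop) x : closureR A x ->
  forall s, 0 < s -> exists w, A w /\ forall i, Rabs (x i - w i) < s.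
Proof.
move=> H s s0; case: (H s s0) => w [Aw Hw]; exists w; split => // i.
have := edist_coord x w i; lra.
Qed.

Lemma closure_from_sup d (A : Vec d -> Prop) x :
  (forall s, 0 < s -> exists w, A w /\ forall i, Rabs (x i - w i) < s) -> closureR A x.
Proof.
move=> H e e0.
have s0 : 0 < e / KK d by apply: Rdiv_lt_0_compat => //; exact: KK_pos.
case: (H _ s0) => w [Aw Hw]; exists w; split => //.
have -> : e = KK d * (e / KK d) by field; have := KK_pos d; lra.
exact: edist_lt_sup.
Qed.

Lemma Rabs_tri3 a b c : Rabs (a - c) <= Rabs (a - b) + Rabs (b - c).
Proof.
have := Rabs_triang (a - b) (b - c).
have -> : a - b + (b - c) = a - c by ring. lra.
Qed.

Lemma mid_close d (x x' y y' : Vec d) i r :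
  Rabs (x i - y i) < r -> Rabs (x' i - y' i) < r -> Rabs (mid x x' i - mid y y' i) < r.
Proof.
move=> H1 H2; rewrite /mid.
have -> : /2 * x i + (1 - /2) * x' i - (/2 * y i + (1 - /2) * y' i)
   = /2 * (x i - y i) + /2 * (x' i - y' i) by field.
have := Rabs_triang (/2 * (x i - y i)) (/2 * (x' i - y' i)).
rewrite !Rabs_mult (Rabs_right (/2)); [move=> ?; lra | lra].
Qed.

Lemma closure_convex d (A : Vec d -> Prop) x x' : set_convex A ->
  closureR A x -> closureR A x' -> closureR A (mid x x').
Proof.
move=> Hc Hx Hx'; apply: closure_from_sup => s s0.
case: (closure_sup Hx s0) => w [Aw Hw]; case: (closure_sup Hx' s0) => w' [Aw' Hw'].
exists (mid w w'); split; first by apply: Hc => //; lra.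
move=> i; exact: mid_close.
Qed.

Lemma P_sub_clOm d (Om : Vec d -> Prop) h M y : is_mesh Om h M ->
  closureR (Omega_h M) y -> closureR Om y.
Proof.
move=> [H1 _] Hy; apply: closure_from_sup => s s0.
have s2 : 0 < s / 2 by lra.
case: (closure_sup Hy s2) => w [Hw Hyw].
case: (interior_self Hw) => T [HT HTw].
have := (proj2 (H1 T HT)) w HTw => Hcw.
case: (closure_sup Hcw s2) => u [Ou Hwu].
exists u; split => // i.
have := Rabs_tri3 (y i) (w i) (u i); have := Hyw i; have := Hwu i; lra.
Qed.

Lemma dot_lin d (a x y : Vec d) p q :
  dot a (fun i => p * x i + q * y i) = p * dot a x + q * dot a y.
Proof.
rewrite /dot -!vsum_scal -vsum_plus; apply: vsum_ext => i; ring.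
Qed.

Lemma dot_pos d (a : Vec d) : (exists i, a i <> 0) -> 0 < dot a a.
Proof.
case=> i Hi.
have := @vsum_term _ (fun j => a j * a j) i (fun j => ltac:(nra)).
have : 0 < a i * a i by nra.
rewrite /dot; lra.
Qed.

Lemma facet_disjoint d (M : seq (Simplex d)) K m :
  facet (closureR (Omega_h M)) K -> K m -> ~ Omega_h M m.
Proof.
case=> a [b [Ha [Hle [HK _]]]] Km Hm.
case: (interior_ball Hm) => r [r0 Hr].
have na : 0 <= enorm a by exact: sqrt_pos.
set t := r / (2 * (enorm a + 1)).
have t0 : 0 < t by rewrite /t; apply: Rdiv_lt_0_compat; lra.
have Hy : closureR (Omega_h M) (fun i => 1 * m i + t * a i).
  apply: closure_self; apply: Hr => i.
  have -> : 1 * m i + t * a i - m i = t * a i by ring.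
  rewrite Rabs_mult Rabs_right; last lra.
  have := coord_le_norm a i => Hai.
  apply: (Rle_lt_trans _ (t * enorm a)); first by apply: Rmult_le_compat_l; lra.
  have E : t * (enorm a + 1) = r / 2 by rewrite /t; field; lra.
  nra.
have := Hle _ Hy; rewrite dot_lin.
have [_ ->] := (proj1 (HK m) Km).
have := dot_pos Ha; nra.
Qed.

Lemma facet_mid d (M : seq (Simplex d)) K x x' :
  set_convex (Omega_h M) ->
  facet (closureR (Omega_h M)) K -> K x -> K x' -> K (mid x x').
Proof.
move=> Hc [a [b [Ha [Hle [HK _]]]]] Kx Kx'.
case: (proj1 (HK x) Kx) => Px Dx; case: (proj1 (HK x') Kx') => Px' Dx'.
apply/HK; split; first exact: closure_convex.
rewrite /mid dot_lin Dx Dx'; ring.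
Qed.

Definition D2 d (x x' : Vec d) := dot (fun i => x i - x' i) (fun i => x i - x' i).

Definition Gd d (Om : Vec d -> Prop) eps r (x x' : Vec d) : Prop :=
  forall y y', (forall i, Rabs (y i - x i) < r) -> (forall i, Rabs (y' i - x' i) < r) ->
  closureR Om y -> closureR Om y' -> eps * eps <= D2 y y' ->
  forall z, (forall i, Rabs (z i - mid y y' i) < r) -> Om z.

Lemma D2_refl d (x : Vec d) : D2 x x = 0.
Proof.
rewrite /D2; apply: Rle_antisym; last exact: dot_ge0.
rewrite -(Rmult_0_r (INR d)) -vsum_const; apply: vsum_le => i; nra.
Qed.

Lemma not_closure d (Om : Vec d -> Prop) x : ~ closureR Om x ->
  exists e, 0 < e /\ forall w, Om w -> e <= edist x w.
Proof.
move=> H; apply: NNPP => H'; apply: H => e e0.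
apply: NNPP => H2; apply: H'; exists e; split => // w Ow.
apply: Rnot_lt_le => Hlt; apply: H2; by exists w.
Qed.

Lemma Rabs_sub_le a b : Rabs (a - b) <= Rabs a + Rabs b.
Proof. have := Rabs_tri3 a 0 b; rewrite Rminus_0_r Rminus_0_l Rabs_Ropp; lra. Qed.
Ltac ilra := intros; lra.
Ltac inra := intros; nra.
Lemma gauge_exists d (Om : Vec d -> Prop) eps : set_open Om -> strictly_convex Om -> 0 < eps ->
  forall x x', exists r, 0 < r /\ Gd Om eps r x x'.
Proof.
move=> Hop Hsc e0 x x'.
have K0 := KK_pos d.
case: (classic (closureR Om x)) => Cx; last first.
  case: (not_closure Cx) => e [ep He].
  exists (e / (2 * KK d)); split; first by apply: Rdiv_lt_0_compat; ilra.
  move=> y y' Hy _ Cy _ _ z _; exfalso.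
  have s0 : 0 < e / (2 * KK d) by apply: Rdiv_lt_0_compat; ilra.
  case: (closure_sup Cy s0) => w [Ow Hw].
  have := He w Ow.
  have : edist x w < KK d * (2 * (e / (2 * KK d))).
    apply: edist_lt_sup; first ilra.
    move=> i; have := Rabs_tri3 (x i) (y i) (w i); have := Rabs_minus_sym (x i) (y i).
    have := Hy i; have := Hw i; ilra.
  have -> : KK d * (2 * (e / (2 * KK d))) = e by field; ilra.
  ilra.
case: (classic (closureR Om x')) => Cx'; last first.
  case: (not_closure Cx') => e [ep He].
  exists (e / (2 * KK d)); split; first by apply: Rdiv_lt_0_compat; ilra.
  move=> y y' _ Hy _ Cy _ z _; exfalso.
  have s0 : 0 < e / (2 * KK d) by apply: Rdiv_lt_0_compat; ilra.
  case: (closure_sup Cy s0) => w [Ow Hw].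
  have := He w Ow.
  have : edist x' w < KK d * (2 * (e / (2 * KK d))).
    apply: edist_lt_sup; first ilra.
    move=> i; have := Rabs_tri3 (x' i) (y' i) (w i); have := Rabs_minus_sym (x' i) (y' i).
    have := Hy i; have := Hw i; ilra.
  have -> : KK d * (2 * (e / (2 * KK d))) = e by field; ilra.
  ilra.
case: (Rlt_le_dec (D2 x x') (eps * eps / 4)) => HD.
  exists (eps / (4 * KK d)); split; first by apply: Rdiv_lt_0_compat; ilra.
  move=> y y' Hy Hy' _ _ HDy z _; exfalso.
  set r := eps / (4 * KK d) in Hy Hy' *.
  have r0 : 0 < r by apply: Rdiv_lt_0_compat; ilra.
  have Er : r * (4 * KK d) = eps by rewrite /r; field; ilra.
  clearbody r.
  have H1 : D2 y y' <= 2 * D2 x x' + INR d * (8 * (r * r)).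
    rewrite /D2 /dot -vsum_const -vsum_scal -vsum_plus; apply: vsum_le => i.
    have A1 := Hy i; have A2 := Hy' i.
    have -> : y i - y' i = (x i - x' i) + ((y i - x i) - (y' i - x' i)) by ring.
    move: A1 A2; set p := x i - x' i; set w := (y i - x i) - (y' i - x' i).
    move=> A1 A2.
    have Aw : Rabs w < 2 * r.
      have := Rabs_sub_le (y i - x i) (y' i - x' i).
      rewrite /w; ilra.
    clearbody p w.
    have : w * w <= 4 * (r * r).
      have -> : w * w = Rabs w * Rabs w by rewrite -Rabs_mult Rabs_right //; inra.
      have := Rabs_pos w; inra.
    move=> HH. have H0 : 0 <= (p - w) * (p - w) by apply: Rle_0_sqr. nra.
  have H2 : INR d * (8 * (r * r)) <= eps * eps / 2.
    have Hd := pos_INR d.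
    have : INR d <= KK d * KK d by rewrite /KK; inra.
    rewrite -Er; inra.
  ilra.
have Hne : x <> x'.
  move=> E; move: HD; rewrite E D2_refl; inra.
have Om_m : Om (mid x x') by apply: Hsc => //; ilra.
case: (open_ball (Hop _ Om_m)) => rho [rho0 Hrho].
exists (rho / 2); split; first ilra.
move=> y y' Hy Hy' _ _ _ z Hz; apply: Hrho => i.
have := Rabs_tri3 (z i) (mid y y' i) (mid x x' i).
have := @mid_close d y y' x x' i (rho / 2) (Hy i) (Hy' i).
have := Hz i; ilra.
Qed.


Lemma clOm_bound d (Om : Vec d -> Prop) M x : (forall z, Om z -> enorm z <= M) ->
  closureR Om x -> forall i, Rabs (x i) <= Rabs M + 1.
Proof.
move=> HM Cx i.
case: (closure_sup Cx Rlt_0_1) => w [Ow Hw].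
have := Rabs_tri3 (x i) (w i) 0; rewrite !Rminus_0_r.
have := coord_le_norm w i; have := HM w Ow; have := Hw i; have := Rle_abs M.
ilra.
Qed.

Lemma penc_bound d (x x' : Vec d) C k : 0 <= C -> (forall i, Rabs (x i) <= C) ->
  (forall i, Rabs (x' i) <= C) -> Rabs (penc x x' k) <= C.
Proof.
move=> C0 Hx Hx'; rewrite /penc /vext.
case: (leq (S k) d); [case: insubP => [i _ _|_] | case: insubP => [i _ _|_]] => //;
  rewrite ?Rabs_R0 //.
Qed.

Theorem lemma6p1 (d : nat) (Om : Vec d -> Prop) (I : R -> Prop)
    (mesh : R -> list (Simplex d)) :
  set_open Om -> set_bounded Om -> set_convex Om ->
  admissible_mesh_family Om I mesh ->
  strictly_convex Om ->
  forall eps, 0 < eps -> exists h0, 0 < h0 /\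
    forall h, I h -> h < h0 ->
      forall K, facet (closureR (Omega_h (mesh h))) K ->
        forall x x', K x -> K x' -> edist x x' <= eps.
Proof.
move=> Hop [M HM] Hcv [HI [_ [_ [Hmesh Hdel]]]] Hsc eps e0.
pose C := Rabs M + 1.
have C0 : 0 <= C by rewrite /C; have := Rabs_pos M; lra.
pose n := addn d d.
pose xt (t : Tn n R) : Vec d := fun i => tnth n t (val i).
pose xt' (t : Tn n R) : Vec d := fun i => tnth n t (addn d (val i)).
have Hg : forall t, { r : posreal | Gd Om eps r (xt t) (xt' t) }.
  move=> t; apply: constructive_indefinite_description.
  case: (gauge_exists Hop Hsc e0 (xt t) (xt' t)) => r [r0 Hr].
  by exists (mkposreal r r0).
pose delta t := proj1_sig (Hg t).
case: (compactness_value n (tenc n (fun _ => - C)) (tenc n (fun _ => C)) delta) => d0 Hd0.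
have d00 := cond_pos d0.
case: (Hdel (d0 / 2)) => [|hd [hd0 Hhd]]; first lra.
exists hd; split => // h Ih hlt K HK x x' Kx Kx'.
have Hmh := Hmesh h Ih.
case: (Hmh) => Hm1 [Hm2 [Hm3 [Hm4 Hm5]]].
apply: Rnot_lt_le => Hlt.
have [Px Px'] : closureR (Omega_h (mesh h)) x /\ closureR (Omega_h (mesh h)) x'.
  case: HK => a [b [_ [_ [HKe _]]]].
  by split; [case: (proj1 (HKe x) Kx) | case: (proj1 (HKe x') Kx')].
have Cx := P_sub_clOm Hmh Px; have Cx' := P_sub_clOm Hmh Px'.
have D2gt : eps * eps <= D2 x x'.
  have E : edist x x' * edist x x' = D2 x x'.
    by rewrite /edist /enorm sqrt_sqrt //; exact: dot_ge0.
  nra.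
pose u := tenc n (penc x x').
have Hb : bounded_n n (tenc n (fun _ => - C)) (tenc n (fun _ => C)) u.
  apply: bounded_nth => k Hk; rewrite /u !tnth_enc //.
  have := penc_bound k C0 (clOm_bound HM Cx) (clOm_bound HM Cx').
  move=> H; have := Rle_abs (penc x x' k); have := Rabs_Ropp (penc x x' k); have := Rle_abs (- penc x x' k); lra.
apply: (Hd0 u Hb) => [[t [_ [Hc Hle]]]].
have Ht : Gd Om eps (delta t) (xt t) (xt' t) := proj2_sig (Hg t).
have lt1 : forall i : 'I_d, (val i < n)%coq_nat.
  move=> i; apply/ltP; rewrite /n; exact: (leq_trans (ltn_ord i) (leq_addr d d)).
have lt2 : forall i : 'I_d, (addn d (val i) < n)%coq_nat.
  move=> i; apply/ltP; rewrite /n ltn_add2l; exact: ltn_ord.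
have Hy : forall i, Rabs (x i - xt t i) < delta t.
  move=> i; have := @close_nth _ _ _ _ Hc _ (lt1 i); rewrite /u tnth_enc // penc1 //.
have Hy' : forall i, Rabs (x' i - xt' t i) < delta t.
  move=> i; have := @close_nth _ _ _ _ Hc _ (lt2 i); rewrite /u tnth_enc // penc2 //.
have Hz := Ht x x' Hy Hy' Cx Cx' D2gt.
have Hm0 : forall z, (forall i, Rabs (z i - mid x x' i) < d0) -> Om z.
  move=> z Hzi; apply: Hz => i; have := Hzi i; lra.
have Km := facet_mid Hm4 HK Kx Kx'.
apply: (facet_disjoint HK Km); apply: (Hhd h Ih hlt); apply: closure_self; split.
  by apply: Hm0 => i; rewrite Rminus_diag Rabs_R0.
exists d0; split; first lra.
move=> y [_ Hny]; apply: Rnot_lt_le => Hl; apply: Hny; apply: Hop; apply: Hm0 => i.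
have := edist_coord (mid x x') y i; rewrite Rabs_minus_sym; lra.
Qed.
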